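(* The polynomials $P_n$ satisfy $P_0(y)=y-1$ and, for $n\ge1$, \[ P_n=nP_{n-1}-P'_{n-1}+\frac{1}{n}\sum_{k=1}^{n-1}k\bigl\{(k-1)P_{k-1}-P_k-P'_{k-1}\bigr\}P_{n-k-1}. \]
   Context: Let $A$ be the ring of formal series $a=\sum_{n=0}^\infty \frac{q_n(y)}{x^n}$, each $q_n$ a complex polynomial of degree at most $n$, with the obvious ring operations and the $x^{-1}$-adic topology. Formal derivatives: $a_x=-\sum_{n\ge1}\frac{n q_n(y)}{x^{n+1}}$, $a_y=\sum_{n\ge1}\frac{q_n'(y)}{x^n}$. For $1+u\in A$ with $u$ having zero constant term, $\log(1+u)=\sum_{k\ge1}(-1)^{k+1}u^k/k$. Let $V$ be the unique solution in $A$ of $V=1+\frac{y}{x}-\frac{1}{x}V-V_x-\frac{1}{x}V_y+\frac{1}{x}\log V$, and define polynomials $P_{n-1}$ ($n\ge1$) by $V=1+\sum_{n=1}^\infty\frac{P_{n-1}(y)}{x^n}$. Primes denote derivatives in $y$. *)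

(* Defs.v *)
From HB Require Import structures.
From mathcomp Require Import all_boot all_order all_algebra.
From mathcomp Require Import reals.
From mathcomp.real_closed Require Import complex.

Set Implicit Arguments.
Unset Strict Implicit.
Unset Printing Implicit Defensive.
Import Order.TTheory GRing.Theory Num.Theory.
Local Open Scope ring_scope.

(* A formal series  a = \sum_n q_n(y) / x^n  is represented by its sequence
   of coefficients  n |-> q_n : {poly F}. *)
Section FormalSeries.
Variable F : fieldType.

Definition series := nat -> {poly F}.

Definition inA (a : series) : Prop := forall n, (size (a n) <= n.+1)%N.

Definition sone : series := fun n => if n == 0%N then 1 else 0.
Definition syx : series := fun n => if n == 1%N then 'X else 0.

Definition sadd (a b : series) : series := fun n => a n + b n.
Definition sopp (a : series) : series := fun n => - a n.

Definition smul (a b : series) : series :=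
  fun n => \sum_(i < n.+1) a i * b (n - i)%N.

Fixpoint spow (a : series) (k : nat) : series :=
  if k is k'.+1 then smul a (spow a k') else sone.

Definition sdivx (a : series) : series :=
  fun n => if n is n'.+1 then a n' else 0.

(* a_x = - \sum_{n>=1} n q_n / x^{n+1} *)
Definition sdx (a : series) : series :=
  fun n => if n is n'.+1 then - (n'%:R *: a n') else 0.

Definition sdy (a : series) : series := fun n => (a n)^`().

(* For V = 1 + u with u having zero constant term,
   log V = \sum_{k>=1} (-1)^{k+1} u^k / k ; since u^k only has terms of
   order >= k in 1/x, the coefficient of x^{-n} is the finite sum over k <= n. *)
Definition slog (V : series) : series :=
  let u : series := fun n => if n == 0%N then 0 else V n in
  fun n => \sum_(1 <= k < n.+1) (((-1) ^+ k.+1) / k%:R) *: spow u k n.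

Definition solves_eq (V : series) : Prop :=
  forall n, V n = sone n + syx n - sdivx V n - sdx V n
                  - sdivx (sdy V) n + sdivx (slog V) n.

End FormalSeries.

(* Main.v *)
Require Import Defs.
From HB Require Import structures.
From mathcomp Require Import all_boot all_order all_algebra.
From mathcomp Require Import reals.
From mathcomp.real_closed Require Import complex.
From mathcomp Require Import ring zify.
Set Implicit Arguments.
Unset Strict Implicit.
Unset Printing Implicit Defensive.
Import Order.TTheory GRing.Theory Num.Theory.
Local Open Scope ring_scope.

Section S.
Variable F : numFieldType.
Local Notation Q := {poly {poly F}}.

Definition tr (N : nat) (a : series F) : Q := \poly_(i < N.+1) a i.

Lemma coef_tr N a i : (i <= N)%N -> (tr N a)`_i = a i.
Proof. by move=> h; rewrite coef_poly ltnS h. Qed.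

Lemma mul_agree N (p q : Q) (a b : series F) n :
  (forall i, (i <= N)%N -> p`_i = a i) -> (forall i, (i <= N)%N -> q`_i = b i) ->
  (n <= N)%N -> (p * q)`_n = smul a b n.
Proof.
move=> hp hq hn; rewrite coefM /smul; apply: eq_bigr => i _.
have hi : (i <= n)%N by rewrite -ltnS.
rewrite hp ?hq //; [exact: leq_trans (leq_subr _ _) hn | exact: leq_trans hi hn].
Qed.

Lemma spow_agree N (p : Q) (a : series F) :
  (forall i, (i <= N)%N -> p`_i = a i) ->
  forall k i, (i <= N)%N -> (p ^+ k)`_i = spow a k i.
Proof.
move=> hp; elim=> [|k IH] i hi /=.
  by rewrite coef1 /sone; case: (i == 0%N).
by rewrite exprS; apply: mul_agree hp IH hi.
Qed.

Lemma spow_small (a : series F) : a 0%N = 0 ->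
  forall k n, (n < k)%N -> spow a k n = 0.
Proof.
move=> a0; elim=> [|k IH] n //= hn.
rewrite /smul big1 // => [[i hi]] _ /=.
case: i hi => [|i] hi; first by rewrite a0 mul0r.
rewrite IH ?mulr0 //; lia.
Qed.

Lemma coefXderiv (p : Q) m : ('X * p^`())`_m = p`_m *+ m.
Proof. by rewrite coefXM; case: m => [|m] //=; rewrite coef_deriv. Qed.

Definition cc (k : nat) : Q := (((-1) ^+ k.+1 / k%:R)%:P)%:P.

Definition Lp N (U : Q) : Q := \sum_(1 <= k < N.+1) cc k * U ^+ k.

Lemma derivLp N U : (Lp N U)^`() = (\sum_(j < N) (- U) ^+ j) * U^`().
Proof.
rewrite /Lp raddf_sum big_add1 /= big_mkord mulr_suml; apply: eq_bigr => j _.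
rewrite derivM derivC mul0r add0r deriv_exp /=.
rewrite mulrnAr -mulrnAl /cc -!rmorphMn /=.
have hj : (j.+1%:R : F) != 0 by rewrite pnatr_eq0.
rewrite -mulr_natr divfK //.
have -> : ((((-1) ^+ j.+2)%:P)%:P : Q) = (-1) ^+ j.
  by rewrite !exprS !mulN1r opprK rmorphXn rmorphN1 rmorphXn rmorphN1.
by rewrite (exprNn U) -mulrA [U^`() * _]mulrC.
Qed.

Lemma telescopeU N (U : Q) : (1 + U) * (\sum_(j < N) (- U) ^+ j) = 1 - (- U) ^+ N.
Proof.
rewrite mulr_sumr.
transitivity (- \sum_(0 <= j < N) ((- U) ^+ j.+1 - (- U) ^+ j)).
  rewrite -sumrN big_mkord; apply: eq_bigr => j _; rewrite exprS.
  move: ((- U) ^+ j) => x; ring.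
by rewrite telescope_sumr // expr0 opprB.
Qed.

Lemma key N (U : Q) n : U`_0 = 0 -> (n <= N)%N ->
  ((1 + U) * ('X * (Lp N U)^`()))`_n = U`_n *+ n.
Proof.
move=> U0 hn.
have hU : U = drop_poly 1 U * 'X.
  have ht : take_poly 1 U = 0.
    apply/polyP => i; rewrite coef_take_poly coef0; case: i => //.
  by rewrite -{1}(poly_take_drop 1 U) ht add0r expr1.
rewrite derivLp.
have -> : (1 + U) * ('X * ((\sum_(j < N) (- U) ^+ j) * U^`())) =
   'X * ((1 + U) * (\sum_(j < N) (- U) ^+ j)) * U^`().
  move: (\sum_(j < N) (- U) ^+ j) => s; ring.
rewrite telescopeU mulrBr mulr1 mulrBl coefB -mulrA coefXderiv.
set W := drop_poly 1 U.
have -> : 'X * ((- U) ^+ N * U^`()) = ((- W) ^+ N * U^`()) * 'X^(N.+1).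
  rewrite {1}hU -mulNr exprMn exprS.
  move: ((- W) ^+ N) ('X ^+ N) => a b; ring.
by rewrite coefMXn ltnS hn subr0.
Qed.

Lemma coef_Lp N (U : Q) (V : series F) :
  (forall i, (i <= N)%N -> U`_i = (if i == 0%N then 0 else V i)) ->
  forall j, (j <= N)%N -> (Lp N U)`_j = slog V j.
Proof.
move=> hU j hj; rewrite /Lp coef_sum /slog /=.
rewrite (big_cat_nat (n := j.+1)) //= [X in _ + X]big_nat_cond [X in _ + X]big1 ?addr0.
  apply: eq_big_nat => k hk; rewrite /cc coefCM mul_polyC.
  by rewrite (spow_agree (a := fun n => if n == 0%N then 0 else V n) hU).
move=> k /andP [/andP [hk1 hk2] _].
rewrite /cc coefCM (spow_agree (a := fun n => if n == 0%N then 0 else V n) hU) //.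
by rewrite spow_small ?mulr0.
Qed.

End S.
Unset Implicit Arguments.

Theorem theorem4p4 (R : realType) (V : series R[i]) :
  inA V -> V 0%N = 1 -> solves_eq V ->
  let P := fun n : nat => V n.+1 in
  P 0%N = 'X - 1 /\
  forall n : nat, (1 <= n)%N ->
    P n = n%:R *: P n.-1 - (P n.-1)^`()
          + n%:R^-1 *: \sum_(1 <= k < n)
              (k%:R *: ((k.-1)%:R *: P k.-1 - P k - (P k.-1)^`()))
                * P (n - k - 1)%N.
Proof.
move=> _ V0 hE P; split.
  rewrite /P; have := hE 1%N; rewrite /sone /syx /sdivx /sdx /sdy /slog /= V0.
  by move=> ->; rewrite big_geq // -polyC1 derivC scale0r oppr0 !subr0 add0r addr0 polyC1 addr0.
move=> n hn.
pose L := slog V.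
have E k : (1 <= k)%N -> V k.+1 = - V k + k%:R *: V k - (V k)^`() + L k.
  move=> hk; have := hE k.+1; rewrite /sone /syx /sdivx /sdx /sdy /=.
  case: k hk => // k _ /= ->; by rewrite add0r sub0r opprK.
pose U := tr n (fun i => if i == 0%N then 0 else V i).
have hU i : (i <= n)%N -> U`_i = (if i == 0%N then 0 else V i) by move=> h; rewrite coef_tr.
have K := @key _ n U n (hU 0%N (leq0n _)) (leqnn n).
rewrite coefM hU // (negbTE (lt0n_neq0 hn)) in K.
have S0 : \sum_(i < n.+1) V i * (L (n - i)%N *+ (n - i)) = V n *+ n.
  rewrite -K; apply: eq_bigr => [[i hi]] _ /=.
  rewrite coefXderiv (coef_Lp hU) ?leq_subr // coefD coef1 (hU i) //.
  by case: i {hi} => [|i] /=; [rewrite V0 addr0 | rewrite add0r].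
have S1 : \sum_(i < n) V i.+1 * (L (n - i.+1)%N *+ (n - i.+1)) =
   \sum_(1 <= k < n) V (n - k)%N * (L k *+ k).
  rewrite -(big_mkord xpredT (fun i => V i.+1 * (L (n - i.+1)%N *+ (n - i.+1)))).
  rewrite big_nat_rev /= big_ltn //= add0n.
  have -> : (n - (n - 1).+1)%N = 0%N by lia.
  rewrite mulr0n mulr0 add0r; apply: eq_big_nat => k /andP [h1 h2].
  have -> : (n - k.+1).+1 = (n - k)%N by lia.
  by have -> : (n - (n - k))%N = k by lia.
move: S0; rewrite big_ord_recl /= V0 mul1r subn0.
rewrite (eq_bigr (fun i : 'I_n => V i.+1 * (L (n - i.+1)%N *+ (n - i.+1)))); last first.
  by move=> i _; rewrite /bump leq0n add1n.
rewrite S1 => S2.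
have S3 : \sum_(1 <= k < n) V (n - k)%N * (L k *+ k) = (V n - L n) *+ n.
  by rewrite mulrnBl -S2 [L n *+ n + _]addrC addrK.
rewrite /P prednK //.
rewrite (eq_big_nat _ _ (F2 := fun k => - (V (n - k)%N * (L k *+ k)))); last first.
  move=> [|k] /andP [h1 h2] //.
  have -> : (n - k.+1 - 1).+1 = (n - k.+1)%N by lia.
  rewrite (E k.+1) //= -(scaler_nat k.+1 (L k.+1)) -!mul_polyC !polyC_natr.
  rewrite -addn1 natrD; ring.
rewrite (E n) // sumrN S3 -(scaler_nat n (V n - L n)) scalerN scalerA mulVf ?pnatr_eq0 -?lt0n // scale1r.
ring.
Qed.
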